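(* Let $(G,M,\Delta)$ be a Garside structure and $(H,N,\delta)$ a parabolic substructure with $H\neq G$ and $H\ne\{1\}$. Put $\omega=\delta^{-1}\Delta$ and $\Phi(\alpha)=\Delta\alpha\Delta^{-1}$. For an integer $k\ge1$ let $d_k=\omega_1\omega_2\cdots\omega_k$, where $\omega_i=\Phi^{-i+1}(\omega)$ for $i\in\{1,\dots,k\}$. Then $\mathrm{diam}(\pi_H(d_k))\ge k$.
   Context: Let $G$ be a group and $M$ a submonoid with $M\cap M^{-1}=\{1\}$. Define $\alpha\le_L\beta$ iff $\alpha^{-1}\beta\in M$, and $\alpha\le_R\beta$ iff $\beta\alpha^{-1}\in M$. For $a\in M$ let $\mathrm{Div}_L(a)=\{b\in M: b\le_L a\}$, $\mathrm{Div}_R(a)=\{b\in M: b\le_R a\}$; $a$ is balanced if these coincide, and then $\mathrm{Div}(a)$ denotes this set. $M$ is Noetherian if each $a\in M$ admits an $n$ such that $a$ is not a product of more than $n$ non-trivial factors. A Garside structure $(G,M,\Delta)$: $\Delta\in M$ balanced, $M$ Noetherian, $\mathrm{Div}(\Delta)$ finite and generating $M$ as a monoid and $G$ as a group, $(G,\le_L)$ a lattice. A parabolic substructure $(H,N,\delta)$: $\delta\in M$ balanced, $H$ (resp. $N$) the subgroup (resp. submonoid) generated by $\mathrm{Div}(\delta)$, and $\mathrm{Div}(\delta)=\mathrm{Div}(\Delta)\cap N$. With $\mathcal S=\mathrm{Div}(\Delta)\setminus\{1\}$ and $\lg$ the word length w.r.t. $\mathcal S$: $d(\alpha,\beta)=\lg(\alpha^{-1}\beta)$;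 $d(\alpha,H)=\min_{\beta\in H}d(\alpha,\beta)$; $\pi_H(\alpha)=\{\beta\in H: d(\alpha,\beta)=d(\alpha,H)\}$; $\mathrm{diam}(X)=\max\{d(\alpha,\beta):\alpha,\beta\in X\}$. *)

(* Defs.v *)
From Stdlib Require Import List Arith Lia.
Import ListNotations.
Set Implicit Arguments.

Record Grp := {
  car :> Type;
  gmul : car -> car -> car;
  gone : car;
  ginv : car -> car;
  gmulA : forall x y z, gmul x (gmul y z) = gmul (gmul x y) z;
  gmul1l : forall x, gmul gone x = x;
  gmul1r : forall x, gmul x gone = x;
  gmulVl : forall x, gmul (ginv x) x = gone;
  gmulVr : forall x, gmul x (ginv x) = gone
}.

Section Defs.
Variable G : Grp.
Local Notation "x * y" := (gmul G x y).
Local Notation "1" := (gone G).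
Local Notation "x ^-1" := (ginv G x) (at level 2).

Definition gprod (l : list G) : G := fold_right (gmul G) 1 l.

Definition gen_monoid (X : G -> Prop) (a : G) : Prop :=
  exists l, Forall X l /\ gprod l = a.
Definition gen_group (X : G -> Prop) (a : G) : Prop :=
  exists l, Forall (fun x => X x \/ X (x^-1)) l /\ gprod l = a.

Definition submonoid (M : G -> Prop) : Prop :=
  M 1 /\ forall x y, M x -> M y -> M (x * y).

Definition leL (M : G -> Prop) (a b : G) : Prop := M (a^-1 * b).
Definition leR (M : G -> Prop) (a b : G) : Prop := M (b * a^-1).

Definition DivL (M : G -> Prop) (a : G) (b : G) : Prop := M b /\ leL M b a.
Definition DivR (M : G -> Prop) (a : G) (b : G) : Prop := M b /\ leR M b a.

Definition balanced (M : G -> Prop) (a : G) : Prop :=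
  M a /\ forall b, DivL M a b <-> DivR M a b.

(* Div(a) for balanced a *)
Definition Div (M : G -> Prop) (a : G) : G -> Prop := DivL M a.

Definition noetherian (M : G -> Prop) : Prop :=
  forall a, M a -> exists n : nat, forall l : list G,
    Forall (fun x => M x /\ x <> 1) l -> gprod l = a -> length l <= n.

Definition finite_set (X : G -> Prop) : Prop :=
  exists l : list G, forall x, X x <-> In x l.

Definition is_lattice (le : G -> G -> Prop) : Prop :=
  (forall a b, exists j, le a j /\ le b j /\
      forall c, le a c -> le b c -> le j c) /\
  (forall a b, exists m, le m a /\ le m b /\
      forall c, le c a -> le c b -> le c m).

Definition garside (M : G -> Prop) (Delta : G) : Prop :=
  submonoid M /\
  (forall x, M x -> M (x^-1) -> x = 1) /\
  balanced M Delta /\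
  noetherian M /\
  finite_set (Div M Delta) /\
  (forall a, M a <-> gen_monoid (Div M Delta) a) /\
  (forall g, gen_group (Div M Delta) g) /\
  is_lattice (leL M).

(* parabolic substructure (H, N, delta): H and N are the subgroup / submonoid
   generated by Div(delta) (see Hsub, Nsub below) *)
Definition Hsub (M : G -> Prop) (delta : G) : G -> Prop := gen_group (Div M delta).
Definition Nsub (M : G -> Prop) (delta : G) : G -> Prop := gen_monoid (Div M delta).

Definition parabolic (M : G -> Prop) (Delta delta : G) : Prop :=
  balanced M delta /\
  forall x, Div M delta x <-> (Div M Delta x /\ Nsub M delta x).

Definition Sgen (M : G -> Prop) (Delta : G) (x : G) : Prop :=
  Div M Delta x /\ x <> 1.

Definition wordlen_le (S : G -> Prop) (a : G) (n : nat) : Prop :=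
  exists l, length l <= n /\ Forall (fun x => S x \/ S (x^-1)) l /\ gprod l = a.

Definition is_lg (S : G -> Prop) (a : G) (n : nat) : Prop :=
  wordlen_le S a n /\ forall m, wordlen_le S a m -> n <= m.

Definition is_dist (S : G -> Prop) (a b : G) (n : nat) : Prop :=
  is_lg S (a^-1 * b) n.

Definition proj (S H : G -> Prop) (alpha : G) (beta : G) : Prop :=
  H beta /\ forall beta', H beta' -> forall n m,
    is_dist S alpha beta n -> is_dist S alpha beta' m -> n <= m.

Definition diam_ge (S X : G -> Prop) (k : nat) : Prop :=
  exists a b, X a /\ X b /\ forall n, is_dist S a b n -> k <= n.

Definition Phi_inv (Delta a : G) : G := Delta^-1 * a * Delta.

Definition omega_i (Delta delta : G) (i : nat) : G :=
  Nat.iter (i - 1) (Phi_inv Delta) (delta^-1 * Delta).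

Definition d_k (Delta delta : G) (k : nat) : G :=
  gprod (map (omega_i Delta delta) (seq 1 k)).

End Defs.
Arguments garside {G}.
Arguments parabolic {G}.
Arguments Hsub {G}.
Arguments Sgen {G}.
Arguments proj {G}.
Arguments diam_ge {G}.
Arguments d_k {G}.

(* Main.v *)
Require Import Defs.
From Stdlib Require Import List Arith Lia.
Import ListNotations.

Local Notation "x * y" := (gmul _ x y).
Local Notation "x ^-1" := (ginv _ x) (at level 2, left associativity, format "x ^-1").
Local Notation e := (gone _).

Lemma mulKV (G : Grp) (x y : G) : x^-1 * (x * y) = y.
Proof. rewrite gmulA, gmulVl, gmul1l. reflexivity. Qed.
Lemma mulVK (G : Grp) (x y : G) : x * (x^-1 * y) = y.
Proof. rewrite gmulA, gmulVr, gmul1l. reflexivity. Qed.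
Lemma inv_uniq (G : Grp) (x y : G) : x * y = e -> y = x^-1.
Proof. intros H. rewrite <- (gmul1r _ (x^-1)), <- H, mulKV. reflexivity. Qed.
Lemma invM (G : Grp) (x y : G) : (x * y)^-1 = y^-1 * x^-1.
Proof. symmetry. apply inv_uniq. rewrite <- gmulA, mulVK, gmulVr. reflexivity. Qed.
Lemma invK (G : Grp) (x : G) : (x^-1)^-1 = x.
Proof. symmetry. apply inv_uniq. apply gmulVl. Qed.
Lemma inv1 (G : Grp) : (gone G)^-1 = gone G.
Proof. symmetry. apply inv_uniq. apply gmul1l. Qed.

Ltac gsimpl := repeat progress (rewrite ?invM, ?invK, ?inv1, ?gmul1l, ?gmul1r, <- ?gmulA, ?mulKV, ?mulVK, ?gmulVl, ?gmulVr).
Ltac gsall := repeat progress (rewrite ?invM, ?invK, ?inv1, ?gmul1l, ?gmul1r, <- ?gmulA, ?mulKV, ?mulVK, ?gmulVl, ?gmulVr in * ).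
Tactic Notation "gsimpl" "in" hyp(H) := repeat progress (rewrite ?invM, ?invK, ?inv1, ?gmul1l, ?gmul1r, <- ?gmulA, ?mulKV, ?mulVK, ?gmulVl, ?gmulVr in H).
From Stdlib Require Import Classical.

Definition gpow (G : Grp) (a : G) (n : nat) : G := gprod _ (repeat a n).

Lemma gpow_S (G : Grp) (a : G) n : gpow G a (S n) = a * gpow G a n.
Proof. reflexivity. Qed.
Lemma gprod_app (G : Grp) (l1 l2 : list G) : gprod _ (l1 ++ l2) = gprod _ l1 * gprod _ l2.
Proof. induction l1 as [|x l IH]; simpl. - rewrite gmul1l; reflexivity. - rewrite IH, gmulA; reflexivity. Qed.
Lemma gpow_add (G : Grp) (a : G) n m : gpow G a (n + m) = gpow G a n * gpow G a m.
Proof. unfold gpow. rewrite repeat_app, gprod_app. reflexivity. Qed.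
Lemma gpow_Sr (G : Grp) (a : G) n : gpow G a (S n) = gpow G a n * a.
Proof. replace (S n) with (n + 1) by lia. rewrite gpow_add. unfold gpow at 2. simpl. rewrite gmul1r. reflexivity. Qed.
Lemma Forall_repeat' {A} (P : A -> Prop) a n : P a -> Forall P (repeat a n).
Proof. intros H; induction n; simpl; constructor; auto. Qed.

Lemma M_gprod (G : Grp) (M : G -> Prop) l : submonoid _ M -> Forall M l -> M (gprod _ l).
Proof. intros [H1 H2] HF. induction HF; simpl; auto. Qed.
Lemma M_gpow (G : Grp) (M : G -> Prop) a n : submonoid _ M -> M a -> M (gpow _ a n).
Proof. intros HM Ha. unfold gpow. apply M_gprod; auto. apply Forall_repeat'; auto. Qed.

Lemma le_trans {G : Grp} {M : G -> Prop} {a b c : G} : submonoid _ M -> leL _ M a b -> leL _ M b c -> leL _ M a c.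
Proof. unfold leL. intros [_ H] H1 H2. specialize (H _ _ H1 H2). gsimpl. gsimpl in H. exact H. Qed.

Lemma Mmul {G : Grp} {M : G -> Prop} {a b : G} : submonoid _ M -> M a -> M b -> M (a * b).
Proof. intros [_ H]; auto. Qed.

Lemma div_conj {G : Grp} {M : G -> Prop} {a s : G} : submonoid _ M -> balanced _ M a ->
  DivL _ M a s -> DivL _ M a (a * s * a^-1).
Proof.
  intros HM [Ha Hb] Hs.
  apply Hb in Hs. destruct Hs as [Ms Rs]. unfold leR in Rs.
  assert (Ht : DivL _ M a (a * s^-1)).
  { split; auto. unfold leL. gsimpl. exact Ms. }
  apply Hb in Ht. destruct Ht as [_ Rt]. unfold leR in Rt. gsall.
  split. - exact Rt. - unfold leL. gsimpl. exact Rs.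
Qed.

Lemma div_conjV {G : Grp} {M : G -> Prop} {a s : G} : submonoid _ M -> balanced _ M a ->
  DivL _ M a s -> DivL _ M a (a^-1 * s * a).
Proof.
  intros HM [Ha Hb] Hs.
  destruct Hs as [Ms Ls]. unfold leL in Ls.
  assert (Ht : DivR _ M a (s^-1 * a)).
  { split; auto. unfold leR. gsimpl. exact Ms. }
  apply Hb in Ht. destruct Ht as [_ Lt]. unfold leL in Lt. gsall.
  assert (Hu : DivR _ M a (a^-1 * (s * a))).
  { split. - exact Lt. - unfold leR. gsimpl. exact Ls. }
  apply Hb in Hu. gsimpl. exact Hu.
Qed.

Lemma M_conj {G : Grp} {M : G -> Prop} {a : G} : submonoid _ M -> balanced _ M a ->
  (forall m, M m <-> gen_monoid _ (Div _ M a) m) ->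
  forall m, M m -> M (a * m * a^-1) /\ M (a^-1 * m * a).
Proof.
  intros HM Hb Hg m Hm. apply Hg in Hm. destruct Hm as [l [Hl <-]].
  induction Hl as [|s l Hs Hl IH]; simpl.
  - gsimpl. destruct HM; auto.
  - destruct IH as [I1 I2]. split.
    + pose proof (div_conj HM Hb Hs) as [H1 _].
      pose proof (Mmul HM H1 I1) as H. gsimpl. gsimpl in H. exact H.
    + pose proof (div_conjV HM Hb Hs) as [H1 _].
      pose proof (Mmul HM H1 I2) as H. gsimpl. gsimpl in H. exact H.
Qed.

Lemma M_conjn {G : Grp} {M : G -> Prop} {a : G} : submonoid _ M -> balanced _ M a ->
  (forall m, M m <-> gen_monoid _ (Div _ M a) m) ->
  forall n m, M m -> M (gpow _ a n * m * (gpow _ a n)^-1) /\ M ((gpow _ a n)^-1 * m * gpow _ a n).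
Proof.
  intros HM Hb Hg n. induction n as [|n IH]; intros m Hm.
  - unfold gpow; simpl. gsimpl. auto.
  - destruct (IH m Hm) as [I1 I2]. split.
    + rewrite gpow_S. destruct (M_conj HM Hb Hg _ I1) as [H _]. gsimpl. gsimpl in H. exact H.
    + rewrite gpow_Sr. destruct (M_conj HM Hb Hg _ I2) as [_ H]. gsimpl. gsimpl in H. exact H.
Qed.

Definition meet_ax {G : Grp} (M : G -> Prop) := forall a b : G, exists m, leL _ M m a /\ leL _ M m b /\
      forall c, leL _ M c a -> leL _ M c b -> leL _ M c m.

Lemma meet_trivial {G : Grp} {M : G -> Prop} {D d : G} : submonoid _ M -> meet_ax M ->
  M d -> M (d^-1 * D) ->
  (forall x, Div _ M d x <-> (Div _ M D x /\ Defs.Nsub _ M d x)) ->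
  forall y, leL _ M y d -> leL _ M y (d^-1 * D) -> leL _ M y e.
Proof.
  intros HM Hmeet Md Mw Hpar y H1 H2.
  destruct (Hmeet d (d^-1*D)) as [u [U1 [U2 U3]]].
  apply (le_trans HM (U3 y H1 H2)).
  assert (Mu : M u).
  { assert (H : leL _ M e u). { apply U3; unfold leL; gsimpl; auto. }
    unfold leL in H; gsimpl in H; exact H. }
  assert (Du : Div _ M d u) by (split; auto).
  assert (Dd : Div _ M d d).
  { split; auto. unfold leL. gsimpl. destruct HM; auto. }
  assert (Ndu : Defs.Nsub _ M d (d * u)).
  { exists [d; u]. split.
    - apply Forall_cons; auto.
    - simpl. gsimpl. reflexivity. }
  assert (DDu : Div _ M D (d * u)).
  { split. apply Mmul; auto. unfold leL in *. gsimpl. gsimpl in U2. exact U2. }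
  assert (Hdu : Div _ M d (d * u)) by (apply Hpar; auto).
  destruct Hdu as [_ L]. unfold leL in *. gsimpl in L. gsimpl. exact L.
Qed.

Lemma keyK {G : Grp} {M : G -> Prop} {D d : G} : submonoid _ M -> balanced _ M D ->
  (forall m, M m <-> gen_monoid _ (Div _ M D) m) -> balanced _ M d -> meet_ax M ->
  M (d^-1 * D) ->
  (forall x, Div _ M d x <-> (Div _ M D x /\ Defs.Nsub _ M d x)) ->
  forall l, Forall (Div _ M d) l -> forall z, leL _ M z (gprod _ l) -> leL _ M z D -> leL _ M z d.
Proof.
  intros HM HbD Hg Hbd Hmeet Mw Hpar l Hl.
  assert (Md : M d) by (destruct Hbd; auto).
  induction Hl as [|s l Hs Hl IH]; intros z Hz1 Hz2; simpl in Hz1.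
  - apply (le_trans HM Hz1). unfold leL. gsimpl. exact Md.
  - assert (Ms : M s) by (destruct Hs; auto).
    assert (Hz3 : leL _ M z (s * D)).
    { apply (le_trans HM Hz2). unfold leL. destruct (M_conj HM HbD Hg s Ms) as [_ H].
      gsimpl. gsimpl in H. exact H. }
    assert (I : leL _ M (s^-1 * z) d).
    { apply IH; unfold leL in *; gsimpl; [exact Hz1 | exact Hz3]. }
    assert (Hsd : leL _ M (s * d) (d * d)).
    { assert (Ht : DivL _ M d (s^-1 * d)).
      { apply (proj2 Hbd). split. destruct Hs as [_ L]; exact L. unfold leR. gsimpl. exact Ms. }
      destruct (div_conjV HM Hbd Ht) as [H _]. unfold leL. gsimpl. gsimpl in H. exact H. }
    assert (Hz4 : leL _ M z (d * d)).
    { apply (@le_trans _ _ _ (s * d) _ HM); auto. unfold leL in *. gsimpl. gsimpl in I. exact I. }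
    assert (J : leL _ M (d^-1 * z) e).
    { apply (meet_trivial HM Hmeet Md Mw Hpar); unfold leL in *; gsimpl; gsimpl in Hz4; auto. }
    unfold leL in *. gsimpl in J. gsimpl. exact J.
Qed.

Lemma comm_pow {G : Grp} {M : G -> Prop} {d : G} : submonoid _ M -> balanced _ M d ->
  forall r y, Div _ M d y -> exists y', Div _ M d y' /\ y * (gpow _ d r)^-1 = (gpow _ d r)^-1 * y'.
Proof.
  intros HM Hbd r. induction r as [|r IH]; intros y Hy.
  - exists y. split; auto. unfold gpow; simpl. gsimpl. reflexivity.
  - destruct (IH y Hy) as [y1 [D1 E1]]. exists (d * y1 * d^-1). split.
    + apply div_conj; auto.
    + rewrite gpow_S, invM. rewrite gmulA, E1. gsimpl. reflexivity.
Qed.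

Lemma H_form {G : Grp} {M : G -> Prop} {d : G} : submonoid _ M -> balanced _ M d ->
  forall h, Hsub M d h -> exists r x, Defs.Nsub _ M d x /\ h = (gpow _ d r)^-1 * x.
Proof.
  intros HM Hbd h [l [Hl <-]]. induction Hl as [|y l Hy Hl IH].
  - exists 0, e. split.
    + exists []. split; auto.
    + unfold gpow; simpl. gsimpl. reflexivity.
  - destruct IH as [r [x [[lx [Hlx Ex]] E]]]. simpl. rewrite E.
    destruct Hy as [Hy | Hy].
    + destruct (comm_pow HM Hbd r y Hy) as [y' [D' E']]. exists r, (y' * x). split.
      * exists (y' :: lx). split. constructor; auto. simpl; rewrite Ex; reflexivity.
      * rewrite gmulA, E'. gsimpl. reflexivity.
    + assert (Dt : Div _ M d (d * y)).
      { apply (proj2 Hbd) in Hy. destruct Hy as [My Ry]. unfold leR in Ry. gsimpl in Ry.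
        split. exact Ry. unfold leL. gsimpl. exact My. }
      destruct (comm_pow HM Hbd r _ Dt) as [t' [D' E']]. exists (S r), (t' * x). split.
      * exists (t' :: lx). split. constructor; auto. simpl; rewrite Ex; reflexivity.
      * rewrite gpow_Sr, invM.
        transitivity (d^-1 * ((d * y) * (gpow _ d r)^-1) * x). { gsimpl. reflexivity. }
        rewrite E'. gsimpl. reflexivity.
Qed.

Lemma gpow_comm (G : Grp) (a : G) n : a * gpow _ a n = gpow _ a n * a.
Proof. rewrite <- gpow_S, gpow_Sr. reflexivity. Qed.

Lemma word_bounds {G : Grp} {M : G -> Prop} {D : G} : submonoid _ M -> balanced _ M D ->
  (forall m, M m <-> gen_monoid _ (Div _ M D) m) ->
  forall w, Forall (fun x => Div _ M D x \/ Div _ M D x^-1) w ->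
  leL _ M (gprod _ w) (gpow _ D (length w)) /\ leL _ M ((gpow _ D (length w))^-1) (gprod _ w).
Proof.
  intros HM HbD Hg w Hw. assert (MD : M D) by (destruct HbD; auto).
  induction Hw as [|x w Hx Hw [IH1 IH2]].
  - unfold gpow; simpl. unfold leL. gsimpl. destruct HM; split; auto.
  - change (length (x :: w)) with (S (length w)).
    change (gprod _ (x :: w)) with (x * gprod _ w).
    assert (A : M (x^-1 * D) /\ M (D * x)).
    { destruct Hx as [[Mx Lx] | Hx].
      + split. exact Lx. apply Mmul; auto.
      + pose proof Hx as [Mx' _]. apply (proj2 HbD) in Hx. destruct Hx as [_ R].
        unfold leR in R. gsimpl in R. split. apply Mmul; auto. exact R. }
    destruct A as [A1 A2]. rewrite gpow_S. split.
    + apply (@le_trans _ _ _ (x * gpow _ D (length w)) _ HM).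
      * unfold leL in *; gsimpl; exact IH1.
      * unfold leL. destruct (M_conjn HM HbD Hg (length w) _ A1) as [_ H].
        gsimpl; gsimpl in H; exact H.
    + unfold leL in *. gsimpl. gsimpl in IH2.
      destruct (M_conjn HM HbD Hg (length w) _ A2) as [H _].
      pose proof (Mmul HM H IH2) as H'. gsimpl in H'.
      rewrite gmulA, gpow_comm, <- gmulA. exact H'.
Qed.

Lemma pow_bound {G : Grp} {M : G -> Prop} {D d : G} : submonoid _ M ->
  (forall x, M x -> M x^-1 -> x = e) -> balanced _ M D ->
  (forall m, M m <-> gen_monoid _ (Div _ M D) m) -> balanced _ M d -> meet_ax M ->
  M (d^-1 * D) ->
  (forall x, Div _ M d x <-> (Div _ M D x /\ Defs.Nsub _ M d x)) -> d <> e ->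
  forall k j, leL _ M (gpow _ d k) (gpow _ D j) -> k <= j.
Proof.
  intros HM Hanti HbD Hg Hbd Hmeet Mw Hpar Hne.
  assert (Md : M d) by (destruct Hbd; auto).
  assert (Dd : Div _ M d d).
  { split; auto. unfold leL. gsimpl. destruct HM; auto. }
  induction k as [|k IH]; intros j H. lia.
  destruct j as [|j].
  - exfalso. apply Hne. apply Hanti. exact Md.
    assert (H1 : leL _ M d (gpow _ d (S k))).
    { unfold leL. rewrite gpow_S. gsimpl. apply M_gpow; auto. }
    pose proof (le_trans HM H1 H) as H2. unfold leL, gpow in H2. simpl in H2.
    gsimpl in H2. exact H2.
  - assert (K : leL _ M (gpow _ d (S k) * (gpow _ D j)^-1) d).
    { apply (keyK HM HbD Hg Hbd Hmeet Mw Hpar (repeat d (S k))).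
      - apply Forall_repeat'; auto.
      - change (gprod _ (repeat d (S k))) with (gpow _ d (S k)).
        unfold leL. gsimpl. apply M_gpow; auto. destruct HbD; auto.
      - unfold leL in *. rewrite (gpow_S _ D j) in H.
        destruct (M_conjn HM HbD Hg j _ H) as [H' _]. gsimpl. gsimpl in H'. exact H'. }
    cut (k <= j); [lia|]. apply IH. unfold leL in *. rewrite (gpow_S _ d k) in K. gsimpl in K.
    destruct (M_conjn HM HbD Hg j _ K) as [_ H']. gsimpl in H'. exact H'.
Qed.

Lemma iter_Phi {G : Grp} (D x : G) n : Nat.iter n (Phi_inv _ D) x = (gpow _ D n)^-1 * x * gpow _ D n.
Proof.
  induction n as [|n IH].
  - unfold gpow; simpl. gsimpl. reflexivity.
  - change (Nat.iter (S n) (Phi_inv _ D) x) with (Phi_inv _ D (Nat.iter n (Phi_inv _ D) x)).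
    rewrite IH. unfold Phi_inv. rewrite gpow_Sr. gsimpl. reflexivity.
Qed.

Lemma iter_Div {G : Grp} {M : G -> Prop} {D : G} : submonoid _ M -> balanced _ M D ->
  forall x n, Div _ M D x -> Div _ M D (Nat.iter n (Phi_inv _ D) x).
Proof.
  intros HM HbD x n Hx. induction n as [|n IH]; auto.
  change (Nat.iter (S n) (Phi_inv _ D) x) with (Phi_inv _ D (Nat.iter n (Phi_inv _ D) x)).
  unfold Phi_inv. apply div_conjV; auto.
Qed.

Lemma dk_closed {G : Grp} (D d : G) k : d_k D d k = (gpow _ d k)^-1 * gpow _ D k.
Proof.
  unfold d_k. induction k as [|k IH].
  - unfold gpow; simpl. gsimpl. reflexivity.
  - rewrite seq_S, map_app, gprod_app, IH.
    change (gprod _ (map (omega_i _ D d) [1 + k])) with (omega_i _ D d (1 + k) * e).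
    unfold omega_i. replace (1 + k - 1) with k by lia. rewrite iter_Phi.
    rewrite (gpow_S _ d k), (gpow_S _ D k). gsimpl. reflexivity.
Qed.

Lemma wl_inv {G : Grp} {M : G -> Prop} {D : G} : forall l, Forall (Div _ M D) l ->
  wordlen_le _ (Sgen M D) (gprod _ l)^-1 (length l).
Proof.
  intros l Hl. induction Hl as [|s l Hs Hl IH].
  - exists []. split. simpl; lia. split. constructor. simpl. rewrite inv1. reflexivity.
  - destruct IH as [w [Lw [Fw Ew]]].
    change (gprod _ (s :: l)) with (s * gprod _ l).
    change (length (s :: l)) with (S (length l)).
    destruct (classic (s = e)) as [Es | Es].
    + exists w. split. lia. split. auto. rewrite invM, Ew, Es, inv1, gmul1r. reflexivity.
    + exists (w ++ [s^-1]). split.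
      * rewrite length_app. simpl. lia.
      * split.
        -- apply Forall_app. split; auto. constructor; [|constructor]. right. rewrite invK. split; auto.
        -- rewrite gprod_app, Ew. change (gprod _ [s^-1]) with (s^-1 * e). gsimpl. reflexivity.
Qed.

Lemma gprod_repeat_inv (G : Grp) (a : G) k : gprod _ (repeat a^-1 k) = (gpow _ a k)^-1.
Proof.
  induction k as [|k IH].
  - unfold gpow; simpl. rewrite inv1. reflexivity.
  - change (gprod _ (repeat a^-1 (S k))) with (a^-1 * gprod _ (repeat a^-1 k)).
    rewrite IH, gpow_Sr, invM. reflexivity.
Qed.

Lemma Hsub_mul {G : Grp} {M : G -> Prop} {d a b : G} : Hsub M d a -> Hsub M d b -> Hsub M d (a * b).
Proof.
  intros [l1 [F1 E1]] [l2 [F2 E2]]. exists (l1 ++ l2). split.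
  apply Forall_app; auto. rewrite gprod_app, E1, E2. reflexivity.
Qed.

Theorem lemma5p3 (G : Grp) (M : G -> Prop) (Delta delta : G) (k : nat) :
  garside M Delta ->
  parabolic M Delta delta ->
  (exists g : G, ~ Hsub M delta g) ->
  (exists h : G, Hsub M delta h /\ h <> gone G) ->
  1 <= k ->
  diam_ge (Sgen M Delta) (proj (Sgen M Delta) (Hsub M delta) (d_k Delta delta k)) k.
Proof.
  intros Hgar Hpar' [g Hng] [h0 [Hh0 Hh0e]] Hk.
  destruct Hgar as [HM [Hanti [HbD [_ [_ [Hg [Hgg [_ Hmeet]]]]]]]].
  destruct Hpar' as [Hbd Hpar].
  set (D := Delta) in *. set (d := delta) in *.
  assert (Md : M d) by (destruct Hbd; auto).
  assert (MD : M D) by (destruct HbD; auto).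
  assert (Dd : Div _ M d d).
  { split; auto. unfold leL. gsimpl. destruct HM; auto. }
  assert (DD : Div _ M D D).
  { split; auto. unfold leL. gsimpl. destruct HM; auto. }
  assert (DDd : Div _ M D d).
  { exact (proj1 (proj1 (Hpar d) Dd)). }
  assert (Mw : M (d^-1 * D)) by (destruct DDd as [_ L]; exact L).
  assert (HdD : d <> D).
  { intro E. apply Hng. rewrite E. apply Hgg. }
  assert (Hd1 : d <> e).
  { intro E. apply Hh0e. clear Hh0e. destruct Hh0 as [l [Hl <-]]. induction Hl as [|x l Hx Hl IH].
    - reflexivity.
    - change (gprod _ (x :: l)) with (x * gprod _ l). rewrite IH, gmul1r.
      assert (Hx1 : forall y, Div _ M d y -> y = e).
      { intros y [My Ly]. unfold leL in Ly. rewrite E, gmul1r in Ly. apply Hanti; auto. }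
      destruct Hx as [Hx | Hx].
      + apply Hx1; auto.
      + rewrite <- (invK _ x), (Hx1 _ Hx), inv1. reflexivity. }
  assert (FC : forall h, Hsub M d h -> leL _ M D h -> False).
  { intros h Hh HDh.
    destruct (H_form HM Hbd h Hh) as [r [x [[lx [Hlx Ex]] Eh]]]. rewrite Eh in HDh.
    assert (HDx : leL _ M D (gprod _ lx)).
    { rewrite Ex. unfold leL in *.
      destruct (M_conj HM HbD Hg (gpow _ d r) (M_gpow _ _ _ _ HM Md)) as [_ H1].
      pose proof (Mmul HM H1 HDh) as H2. gsimpl in H2. exact H2. }
    assert (HDD : leL _ M D D) by (unfold leL; gsimpl; destruct HM; auto).
    pose proof (keyK HM HbD Hg Hbd Hmeet Mw Hpar lx Hlx D HDx HDD) as H3.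
    unfold leL in H3. apply HdD.
    assert (E : d^-1 * D = e).
    { apply Hanti; auto. gsimpl. exact H3. }
    rewrite <- (gmul1r _ d), <- E. gsimpl. reflexivity. }
  assert (Hpow : forall k, Hsub M d (gpow _ d k)).
  { intros j. exists (repeat d j). split. apply Forall_repeat'. left; auto. reflexivity. }
  assert (Hpowi : forall k, Hsub M d ((gpow _ d k)^-1)).
  { intros j. exists (repeat d^-1 j). split. apply Forall_repeat'. right. rewrite invK; auto.
    apply gprod_repeat_inv. }
  assert (He : Hsub M d e).
  { exists []. split; auto. }
  assert (LB : forall b, Hsub M d b -> forall m, is_dist _ (Sgen M D) (d_k D d k) b m -> k <= m).
  { intros b Hb m [[w [Lw [Fw Ew]]] _].
    assert (Fw' : Forall (fun x => Div _ M D x \/ Div _ M D x^-1) w).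
    { eapply Forall_impl; [|exact Fw]. intros x [[H1 _]|[H1 _]]; auto. }
    destruct (word_bounds HM HbD Hg w Fw') as [_ B]. rewrite Ew, dk_closed in B.
    destruct (le_lt_dec k (length w)) as [Hl | Hl]. lia. exfalso.
    apply (FC (gpow _ d k * b)). apply Hsub_mul; auto.
    assert (Ej : k = S (k - S (length w)) + length w) by lia.
    set (j := k - S (length w)) in Ej.
    unfold leL in *. gsimpl in B.
    rewrite Ej in B. rewrite (gpow_add _ D (S j) (length w)), (gpow_S _ D j) in B.
    rewrite <- Ej in B. gsimpl in B.
    pose proof (Mmul HM (M_gpow _ _ _ j HM MD) B) as B2. gsimpl in B2. exact B2. }
  assert (Hom : Forall (Div _ M D) (map (omega_i _ D d) (seq 1 k))).
  { apply Forall_forall. intros x Hx. apply in_map_iff in Hx. destruct Hx as [i [<- _]].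
    unfold omega_i. apply iter_Div; auto. split; auto. unfold leL. destruct (M_conj HM HbD Hg d Md) as [_ H1]. gsimpl. gsimpl in H1. exact H1. }
  exists ((gpow _ d k)^-1), e. split; [|split].
  - split. apply Hpowi. intros b' Hb' n m Hn Hm. apply LB in Hm; auto.
    destruct Hn as [_ Hmin]. cut (n <= k). lia. apply Hmin.
    assert (E : (d_k D d k)^-1 * (gpow _ d k)^-1 = (gprod _ (repeat D k))^-1).
    { rewrite dk_closed. change (gprod _ (repeat D k)) with (gpow _ D k). gsimpl. reflexivity. }
    rewrite E. pose proof (@wl_inv _ M D (repeat D k) (Forall_repeat' _ _ _ DD)) as W.
    rewrite repeat_length in W. exact W.
  - split. exact He. intros b' Hb' n m Hn Hm. apply LB in Hm; auto.
    destruct Hn as [_ Hmin]. cut (n <= k). lia. apply Hmin.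
    rewrite gmul1r. pose proof (@wl_inv _ M D _ Hom) as W.
    rewrite length_map, length_seq in W. exact W.
  - intros n [[w [Lw [Fw Ew]]] _].
    assert (Fw' : Forall (fun x => Div _ M D x \/ Div _ M D x^-1) w).
    { eapply Forall_impl; [|exact Fw]. intros x [[H1 _]|[H1 _]]; auto. }
    destruct (word_bounds HM HbD Hg w Fw') as [B _]. rewrite Ew in B.
    cut (k <= length w). lia.
    apply (pow_bound HM Hanti HbD Hg Hbd Hmeet Mw Hpar Hd1).
    unfold leL in *. gsimpl in B. gsimpl. exact B.
Qed.
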